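(* Let $K$ be a number field, let $X\subseteq M_d(K)$ be closed in the linear Zariski topology, and let $\mathcal S=\langle X\rangle$. Let $A\in\mathcal S$ be completely pseudo-regular and $B\in[A]_{\mathcal S}$. (1) There exist completely pseudo-regular $C,D\in[A]_{\mathcal S}$ such that $B=E(D)B$ and $B=BE(C)$. (2) Suppose $B=B_1B_2$ with $B_1,B_2\in\mathcal S$. Then there exists a completely pseudo-regular element $C\in[A]_{\mathcal S}$ such that $B_1B_2=B_1E(C)B_2$.
   Context: The linear Zariski topology on $M_d(K)$ has as closed sets the finite unions of vector subspaces; $\langle X\rangle$ is the subsemigroup of $M_d(K)$ generated by $X$. A matrix $C$ is completely pseudo-regular if it lies in a subgroup of the multiplicative semigroup $M_d(K)$ (equivalently $\operatorname{im} C\cap\ker C=0$); then $E(C)$ denotes the unique idempotent matrix with $\operatorname{im}E(C)=\operatorname{im}C$ and $\ker E(C)=\ker C$ (the identity of any subgroup containing $C$). For $P,Q\in M_d(K)$ write $P\parallel Q$ if $\operatorname{im}P=\operatorname{im}Q$ and $\ker P=\ker Q$. For $P,Q\in\mathcal S$, write $P\sim_{\mathcal S}Q$ if there exist $C,D,C',D'\in\mathcal S\cup\{I\}$ with $Q\parallel DPC$ and $P\parallel D'QC'$; this is an equivalence relation on $\mathcal S$, and $[P]_{\mathcal S}$ denotes the class of $P$. *)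

(* Defs.v *)
From HB Require Import structures.
From mathcomp Require Import all_boot all_order all_algebra all_field.
From Stdlib Require Import ClassicalEpsilon.
Set Implicit Arguments. Unset Strict Implicit. Unset Printing Implicit Defensive.
Import GRing.Theory.
Local Open Scope ring_scope.

(* A number field is modelled as a finite-dimensional field extension of Q:
   K : fieldExtType rat. Matrices act on row vectors (mathcomp convention):
   im P = row space of P, ker P = kermx P (left kernel). *)

Section Defs.
Variables (K : fieldExtType rat) (d : nat).
Local Notation M := 'M[K]_d.

Definition lin_zariski_closed (X : M -> Prop) : Prop :=
  exists Vs : seq {vspace M}, forall P, X P <-> exists2 V, V \in Vs & P \in V.

Inductive gen_sg (X : M -> Prop) : M -> Prop :=
| gen_sg_base P : X P -> gen_sg X P
| gen_sg_mul P Q : gen_sg X P -> gen_sg X Q -> gen_sg X (P *m Q).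

Definition is_subgroup (G : M -> Prop) : Prop :=
  exists e, [/\ G e,
    (forall x y, G x -> G y -> G (x *m y)),
    (forall x, G x -> e *m x = x /\ x *m e = x) &
    (forall x, G x -> exists y, [/\ G y, x *m y = e & y *m x = e])].

Definition compl_pseudo_regular (C : M) : Prop :=
  exists G, is_subgroup G /\ G C.

Definition par (P Q : M) : Prop :=
  (P == Q)%MS /\ (kermx P == kermx Q)%MS.

Definition idem_spec (C E : M) : Prop := E *m E = E /\ par E C.

Definition Eof (C : M) : M := epsilon (inhabits (0 : M)) (idem_spec C).

Definition in_S1 (X : M -> Prop) (P : M) : Prop := gen_sg X P \/ P = 1%:M.

Definition sim_S (X : M -> Prop) (P Q : M) : Prop :=
  exists C D C' D', [/\ in_S1 X C, in_S1 X D, in_S1 X C' & in_S1 X D'] /\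
    par Q (D *m P *m C) /\ par P (D' *m Q *m C').

Definition in_class (X : M -> Prop) (P Q : M) : Prop :=
  gen_sg X Q /\ sim_S X P Q.

End Defs.

(* Main.v *)
Require Import Defs.
From HB Require Import structures.
From mathcomp Require Import all_boot all_order all_algebra all_field.
From Stdlib Require Import ClassicalEpsilon.
From mathcomp Require Import zify.
Set Implicit Arguments. Unset Strict Implicit. Unset Printing Implicit Defensive.
Import GRing.Theory.
Local Open Scope ring_scope.

Section Aux.
Variables (K : fieldExtType rat) (d : nat).
Local Notation M := 'M[K]_d.

Lemma subR m1 m2 (P : 'M[K]_(m1, d)) (Q : 'M[K]_(m2, d)) :
  (P <= Q)%MS -> (\rank Q <= \rank P)%N -> (Q <= P)%MS.
Proof.
move=> sPQ le; rewrite -(mxrank_leqif_sup sPQ).2 eqn_leq le mxrankS //.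
Qed.

Lemma kerE (P Q : M) : (kermx P <= kermx Q)%MS -> forall z : M, z *m P = 0 -> z *m Q = 0.
Proof.
move=> sk z /sub_kermxP zP; apply/sub_kermxP; exact: submx_trans zP sk.
Qed.

Lemma par_of (P Q : M) : (Q <= P)%MS -> (kermx P == kermx Q)%MS -> par P Q.
Proof.
move=> sQP ek; split => //; apply/andP; split => //.
apply: subR => //.
have := eqmx_rank ek; rewrite !mxrank_ker.
have := rank_leq_row P; have := rank_leq_row Q; lia.
Qed.

Lemma idem_par_mul (E P : M) : E *m E = E -> par E P ->
  P *m E = P /\ E *m P = P.
Proof.
move=> EE [/andP [sEP sPE] /andP [sk1 sk2]]; split.
  by case/submxP: sPE => m ->; rewrite -mulmxA EE.
have h : (1%:M - E) *m E = 0 by rewrite mulmxBl mul1mx EE subrr.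
have := kerE sk1 h; rewrite mulmxBl mul1mx => /eqP; rewrite subr_eq0 => /eqP <-//.
Qed.

Lemma cpr_of (E P : M) : E *m E = E -> par E P -> compl_pseudo_regular P.
Proof.
move=> EE pEP; have [PE EP] := idem_par_mul EE pEP.
case: pEP => [/andP [sEP sPE] /andP [sk1 sk2]].
pose Z := P + (1%:M - E).
have EZ : E *m Z = P by rewrite /Z mulmxDr mulmxBr mulmx1 EP EE subrr addr0.
have ZE : Z *m E = P by rewrite /Z mulmxDl mulmxBl mul1mx PE EE subrr addr0.
have Zu : Z \in unitmx.
  rewrite -row_free_unit -kermx_eq0; apply/eqP.
  have hz : kermx Z *m Z = 0 by apply: mulmx_ker.
  set x := kermx Z in hz *.
  have xP : x *m P = 0 by rewrite -ZE mulmxA hz mul0mx.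
  have xE : x *m E = 0 by apply: kerE sk2 _ _.
  by move: hz; rewrite /Z mulmxDr xP add0r mulmxBr mulmx1 xE subr0.
pose y := E *m invmx Z.
have yE : y = E *m invmx Z by [].
have Ey : invmx Z *m E = y.
  rewrite /y -[invmx Z *m E]mulmx1 -(mulmxV Zu) !mulmxA -(mulmxA _ E Z) EZ -ZE.
  by rewrite !mulmxA mulVmx // mul1mx.
exists (fun Q => [/\ E *m Q = Q, Q *m E = Q & exists R, [/\ E *m R = R, R *m E = R, Q *m R = E & R *m Q = E]]).
split; last first.
  split => //; exists y; split.
  - by rewrite /y mulmxA EE.
  - by rewrite -Ey -mulmxA EE.
  - rewrite -ZE -mulmxA yE (mulmxA E E) EE -yE -Ey mulmxA mulmxV // mul1mx //.
  - rewrite -EZ -Ey !mulmxA -(mulmxA _ E E) EE -(mulmxA _ E Z) EZ -ZE mulmxA mulVmx // mul1mx //.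
exists E; split.
- split => //; exists E; split => //.
- move=> x z [Ex xE [rx [Erx rxE xrx rxx]]] [Ez zE [rz [Erz rzE zrz rzz]]].
  split; first by rewrite mulmxA Ex.
  + by rewrite -mulmxA zE.
  + exists (rz *m rx); split; first by rewrite mulmxA Erz.
    * by rewrite -mulmxA rxE.
    * by rewrite mulmxA -(mulmxA x) zrz xE xrx.
    * by rewrite mulmxA -(mulmxA rz) rxx rzE rzz.
- by move=> x [Ex xE _].
- move=> x [Ex xE [rx [Erx rxE xrx rxx]]]; exists rx; split => //.
  split => //; exists x; split => //.
Qed.

Lemma idem_exists (P : M) : (forall z : M, z *m P *m P = 0 -> z *m P = 0) ->
  exists E : M, E *m E = E /\ par E P.
Proof.
move=> kP.
have cap0 : (P :&: kermx P)%MS = 0.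
  have [m Ym] := submxP (capmxSl P (kermx P)).
  have /sub_kermxP Y0 := capmxSr P (kermx P).
  by rewrite Ym kP // -Ym.
have full : (1%:M <= P + kermx P)%MS.
  apply: submx_full; rewrite /row_full mxrank_disjoint_sum // mxrank_ker.
  by rewrite subnKC // rank_leq_row.
exists (proj_mx P (kermx P)); split; first exact: proj_mx_proj.
set E := proj_mx P (kermx P).
have PE : P *m E = P by apply: proj_mx_id.
split; apply/andP; split.
- by have := proj_mx_sub P (kermx P) (1%:M : M); rewrite mul1mx.
- by rewrite -{1}PE submxMl.
- have hk : (kermx E - kermx E *m E <= kermx P)%MS.
    by apply: proj_mx_compl_sub; apply: submx_trans full; apply: submx1.
  by move: hk; rewrite mulmx_ker subr0.
- by apply/sub_kermxP; apply: proj_mx_0.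
Qed.
End Aux.

Section Main.
Variables (K : fieldExtType rat) (d : nat) (X : 'M[K]_d -> Prop) (A B D C D' C' W : 'M[K]_d).
Local Notation M := 'M[K]_d.
Hypotheses (hA : gen_sg X A) (cA : compl_pseudo_regular A)
  (pB : par B (D *m A *m C)) (pA : par A W) (hW : W = D' *m B *m C').

Lemma S1mul (P Q : M) : in_S1 X P -> in_S1 X Q -> in_S1 X (P *m Q).
Proof.
case=> [hP|->]; case=> [hQ|->]; rewrite ?mul1mx ?mulmx1; try by left.
- by left; apply: gen_sg_mul.
- by right.
Qed.

Lemma gen_l (P Q : M) : in_S1 X P -> gen_sg X Q -> gen_sg X (P *m Q).
Proof. case=> [hP|->] hQ; [exact: gen_sg_mul | by rewrite mul1mx]. Qed.

Lemma gen_r (P Q : M) : gen_sg X Q -> in_S1 X P -> gen_sg X (Q *m P).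
Proof. move=> hQ; case=> [hP|->]; [exact: gen_sg_mul | by rewrite mulmx1]. Qed.


Lemma RA (u : M) : (u <= A)%MS -> u *m A = 0 -> u = 0.
Proof.
case: cA => G [[e [Ge Gmul Gid Ginv]] GA].
have [y [_ Ay yA]] := Ginv A GA; have [eA Ae] := Gid A GA.
case/submxP=> m -> h.
by rewrite -Ae -Ay !mulmxA h !mul0mx.
Qed.

Lemma WsubA : (W <= A)%MS.
Proof. by case: pA => /andP[_ ->]. Qed.

Lemma kerWA (z : M) : z *m W = 0 -> z *m A = 0.
Proof. by apply: kerE; case: pA => _ /andP[_ ->]. Qed.

Lemma kerAW (z : M) : z *m A = 0 -> z *m W = 0.
Proof. by apply: kerE; case: pA => _ /andP[-> _]. Qed.

Lemma chain1 (u : M) : u *m A *m W = 0 -> u *m A = 0.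
Proof. by move=> h; apply: RA; [apply: submxMl | apply: kerWA]. Qed.

Lemma chain2 (u : M) : u *m W *m A = 0 -> u *m W = 0.
Proof.
by move=> h; apply: RA => //; apply: submx_trans (submxMl _ _) WsubA.
Qed.

Lemma rkW : \rank W = \rank A.
Proof. by case: pA => /eqmx_rank ->. Qed.

Lemma rkB : (\rank B <= \rank A)%N.
Proof.
case: pB => /eqmx_rank -> _.
apply: leq_trans (mxrankM_maxl _ _) _; exact: mxrankM_maxr.
Qed.

Lemma rkBC : \rank (B *m C') = \rank B.
Proof.
apply/eqP; rewrite eqn_leq mxrankM_maxl /=.
apply: leq_trans rkB _; rewrite -rkW hW -mulmxA; exact: mxrankM_maxr.
Qed.

Lemma BCsub : (B *m C' <= A)%MS.
Proof.
apply: submx_trans WsubA; apply: subR; first by rewrite hW -mulmxA submxMl.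
by rewrite rkW rkBC rkB.
Qed.

Lemma BCker (z : M) : z *m (B *m C') = 0 -> z *m B = 0.
Proof.
apply: kerE; apply: subR.
  by apply/sub_kermxP; rewrite mulmxA mulmx_ker mul0mx.
by rewrite !mxrank_ker rkBC.
Qed.

Lemma parWAW : par A (W *m A *m W).
Proof.
apply: par_of.
  apply: submx_trans WsubA; exact: submxMl.
apply/andP; split.
  by apply/sub_kermxP; rewrite !mulmxA (kerAW (mulmx_ker A)) !mul0mx.
apply/sub_kermxP; apply: kerWA; apply: chain2; apply: chain1.
by have := mulmx_ker (W *m A *m W); rewrite !mulmxA.
Qed.

Lemma core (B1 B2 : M) : in_S1 X B1 -> in_S1 X B2 -> in_S1 X C' -> in_S1 X D' ->
  B1 *m B2 = B ->
  exists C0 : M, [/\ compl_pseudo_regular C0, in_class X A C0 &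
           B1 *m Eof C0 *m B2 = B1 *m B2].
Proof.
move=> h1 h2 hC' hD' hB.
have ST : (D' *m B1) *m (B2 *m C') = W by rewrite hW -hB !mulmxA.
set T := B2 *m C' in ST *; set S := D' *m B1 in ST *.
have hT : in_S1 X T by apply: S1mul.
have hS : in_S1 X S by apply: S1mul.
pose C0 := T *m A *m S.
have kP : forall z : M, z *m C0 *m C0 = 0 -> z *m C0 = 0.
  move=> z h.
  have h1' : z *m T *m A *m W *m A *m W = 0.
    have := congr1 (mulmx^~ T) h; rewrite mul0mx => <-.
    by rewrite -!ST /C0 !mulmxA.
  have := chain1 (chain2 (chain1 h1')).
  by move=> hh; rewrite /C0 (mulmxA z) (mulmxA z) hh mul0mx.
have [E [EE pE]] := idem_exists kP.
have spec : idem_spec C0 (Eof C0).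
  by rewrite /Eof; apply: epsilon_spec; exists E.
case: spec => EE' pE'.
exists C0; split.
- exact: cpr_of EE pE.
- split; first by apply: gen_r => //; apply: gen_l.
  exists S, T, T, S; split; first by split.
  split.
    by rewrite /C0; split; apply/andP; split.
  rewrite /C0 (mulmxA S (T *m A)) (mulmxA S T) ST -(mulmxA (W *m A) S T) ST.
  exact: parWAW.
- set F := Eof C0 in EE' pE' *.
  case: pE' => /andP[sFC _] /andP[sk _].
  have sFB1 : (B1 *m F <= B1)%MS.
    apply: submx_trans (submxMl _ _) _; apply: submx_trans sFC _.
    apply: submx_trans (submxMl (T *m A) S) _; exact: submxMl.
  case/submxP: sFB1 => m hm.
  have h0 : (B1 - B1 *m F) *m C0 = 0.
    apply: kerE sk _ _; by rewrite mulmxBl -mulmxA EE' subrr.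
  have key : (B1 - B1 *m F) *m B2 = 0.
    rewrite hm -[B1 in B1 - _]mul1mx -mulmxBl.
    rewrite hm -[B1 in B1 - _]mul1mx -mulmxBl in h0.
    set w := (1%:M - m) in h0 *.
    rewrite -mulmxA hB; apply: BCker; rewrite -hB.
    apply: RA.
      by apply: submx_trans (submxMl _ _) _; rewrite hB; exact: BCsub.
    apply: chain1.
    have := congr1 (mulmx^~ T) h0; rewrite mul0mx => <-.
    by rewrite -ST /C0 /T !mulmxA.
  by move: key; rewrite mulmxBl => /eqP; rewrite subr_eq0 => /eqP ->.
Qed.
End Main.

Theorem lemmaV11 (K : fieldExtType rat) (d : nat) (X : 'M[K]_d -> Prop)
    (A B : 'M[K]_d) :
  lin_zariski_closed X ->
  gen_sg X A -> compl_pseudo_regular A -> in_class X A B ->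
  (exists C D : 'M[K]_d,
     [/\ compl_pseudo_regular C, compl_pseudo_regular D,
         in_class X A C & in_class X A D] /\
     B = Eof D *m B /\ B = B *m Eof C) /\
  (forall B1 B2 : 'M[K]_d, gen_sg X B1 -> gen_sg X B2 -> B = B1 *m B2 ->
     exists C : 'M[K]_d,
       [/\ compl_pseudo_regular C, in_class X A C &
           B1 *m B2 = B1 *m Eof C *m B2]).
Proof.
move=> _ hA cA [hB [C [D [C' [D' [[hC hD hC' hD'] [pB pA]]]]]]].
have cr := core hA cA pB pA (erefl (D' *m B *m C')).
split.
  have [C1 [cC1 iC1 e1]] := cr B 1%:M (or_introl hB) (or_intror erefl) hC' hD' (mulmx1 B).
  have [D1 [cD1 iD1 e2]] := cr 1%:M B (or_intror erefl) (or_introl hB) hC' hD' (mul1mx B).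
  exists C1, D1; split; first by split.
  rewrite !mul1mx in e2; rewrite !mulmx1 in e1.
  by split.
move=> B1 B2 g1 g2 hB12.
have [C1 [c1 i1 e1]] := cr B1 B2 (or_introl g1) (or_introl g2) hC' hD' (esym hB12).
by exists C1; split.
Qed.
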